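(* Consider the second-order map defined below. When there are only fundamentalists and extrapolators, i.e. $w^C=0$, the map admits $P_1$, with $\bar e=-\Omega\Delta y^{BP}$ and $\Delta\bar y=\Delta y^{BP}$, as its unique equilibrium. When chartists are present ($w^C>0$), the map also admits the equilibria $P_2$ and $P_3$, with $\bar e=-\Omega\Delta y^{BP}\pm\sqrt{w^C/w^F}$ and $\Delta\bar y=\Delta y^{BP}$.
   Context: The (log) exchange rate $e_t$ and the output growth rate $\Delta y_t$ evolve according to $$e_t=e_{t-1}+(\mu+\rho)\left[w^F\left(-\Omega\Delta y_{t-1}-e_{t-1}\right)^3+w^C\left(e_{t-1}+\Omega\Delta y_{t-1}\right)+w^E\left(e_{t-1}-e_{t-2}\right)\right],$$ $$\Delta y_t=\Delta y_{t-1}+w^{flex}\beta\left\{\Delta y^{BP}-\gamma\left[w^F\left(-\Omega\Delta y_{t-1}-e_{t-1}\right)^3+w^C\left(e_{t-1}+\Omega\Delta y_{t-1}\right)+w^E\left(e_{t-1}-e_{t-2}\right)\right]-\Delta y_{t-1}\right\},$$ where $\mu>0$, $\rho>0$, $0<\beta<1$, $0<\Omega<1$, $0<w^{flex}<1$, $\Delta y^{BP}\in\mathbb{R}$ is a constant, $\gamma=\frac{(1-\theta)(\mu+\rho)}{\theta\pi}>0$ with $\theta\in(0,1)$, $\pi>0$, and $w^F\in(0,1]$, $w^C,w^E\in[0,1)$ are the shares of fundamentalists, chartists and trend-extrapolators with $w^F+w^C+w^E=1$. An equilibrium is a pair $(\bar e,\Delta\bar y)$ such that $e_t=e_{t-1}=e_{t-2}=\bar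 e$ and $\Delta y_t=\Delta y_{t-1}=\Delta\bar y$ is a solution of the map. *)

(* Defs.v *)
From Stdlib Require Import Reals.
Open Scope R_scope.

Definition gamma_of (theta pi mu rho : R) : R :=
  (1 - theta) * (mu + rho) / (theta * pi).

Definition bracket (Omega wF wC wE e1 e2 dy1 : R) : R :=
  wF * (- Omega * dy1 - e1) ^ 3 + wC * (e1 + Omega * dy1) + wE * (e1 - e2).

(* The second-order map: given e_{t-1} = e1, e_{t-2} = e2, dy_{t-1} = dy1,
   returns e_t. *)
Definition e_next (mu rho Omega wF wC wE e1 e2 dy1 : R) : R :=
  e1 + (mu + rho) * bracket Omega wF wC wE e1 e2 dy1.

Definition dy_next (mu rho beta Omega wflex dyBP theta pi wF wC wE e1 e2 dy1 : R) : R :=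
  dy1 + wflex * beta *
    (dyBP - gamma_of theta pi mu rho * bracket Omega wF wC wE e1 e2 dy1 - dy1).

Definition is_equilibrium (mu rho beta Omega wflex dyBP theta pi wF wC wE eb dyb : R) : Prop :=
  e_next mu rho Omega wF wC wE eb eb dyb = eb /\
  dy_next mu rho beta Omega wflex dyBP theta pi wF wC wE eb eb dyb = dyb.

(* Main.v *)
Require Import Defs.
From Stdlib Require Import Reals Lra Psatz.
Open Scope R_scope.

Lemma key (mu rho beta Omega wflex dyBP theta pi wF wC wE eb dyb : R) :
  0 < mu + rho -> 0 < wflex * beta ->
  is_equilibrium mu rho beta Omega wflex dyBP theta pi wF wC wE eb dyb <->
  (dyb = dyBP /\ (eb + Omega*dyb) * (wC - wF * (eb + Omega*dyb)^2) = 0).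
Proof.
  intros H1 H2. unfold is_equilibrium, e_next, dy_next.
  assert (HB : bracket Omega wF wC wE eb eb dyb = (eb + Omega*dyb) * (wC - wF * (eb + Omega*dyb)^2))
    by (unfold bracket; ring).
  rewrite HB. split.
  - intros [Ha Hb].
    assert (Hz : (mu+rho) * ((eb + Omega*dyb) * (wC - wF * (eb + Omega*dyb)^2)) = 0) by lra.
    apply Rmult_integral in Hz. destruct Hz as [Hz|Hz]; [lra|].
    rewrite Hz in Hb.
    assert (Hw : wflex * beta * (dyBP - dyb) = 0) by lra.
    apply Rmult_integral in Hw. destruct Hw; [lra|]. split; lra.
  - intros [Ha Hb]. rewrite Hb. subst. split; ring.
Qed.

Theorem proposition4
  (mu rho beta Omega wflex dyBP theta pi wF wC wE : R)
  (Hmu : 0 < mu) (Hrho : 0 < rho)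
  (Hbeta0 : 0 < beta) (Hbeta1 : beta < 1)
  (HOm0 : 0 < Omega) (HOm1 : Omega < 1)
  (Hwf0 : 0 < wflex) (Hwf1 : wflex < 1)
  (Hth0 : 0 < theta) (Hth1 : theta < 1) (Hpi : 0 < pi)
  (HwF0 : 0 < wF) (HwF1 : wF <= 1)
  (HwC0 : 0 <= wC) (HwC1 : wC < 1)
  (HwE0 : 0 <= wE) (HwE1 : wE < 1)
  (Hsum : wF + wC + wE = 1) :
  (wC = 0 ->
     forall eb dyb : R,
       is_equilibrium mu rho beta Omega wflex dyBP theta pi wF wC wE eb dyb <->
       (eb = - Omega * dyBP /\ dyb = dyBP)) /\
  (0 < wC ->
     forall eb dyb : R,
       is_equilibrium mu rho beta Omega wflex dyBP theta pi wF wC wE eb dyb <->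
       (dyb = dyBP /\
        (eb = - Omega * dyBP \/
         eb = - Omega * dyBP + sqrt (wC / wF) \/
         eb = - Omega * dyBP - sqrt (wC / wF)))).
Proof.
  assert (H1 : 0 < mu + rho) by lra.
  assert (H2 : 0 < wflex * beta) by nra.
  split.
  - intros HC eb dyb. rewrite key by assumption. subst wC. split.
    + intros [Hd Hx]. subst dyb.
      assert (Hc : (eb + Omega*dyBP)^3 * wF = 0) by nra.
      apply Rmult_integral in Hc. destruct Hc as [Hc|Hc]; [|lra].
      assert (eb + Omega*dyBP = 0) by (destruct (Req_dec (eb + Omega*dyBP) 0) as [Hq|Hq]; [exact Hq | exfalso; exact (pow_nonzero _ 3 Hq Hc)]).
      split; lra.
    + intros [He Hd]. subst. split; [reflexivity|]. ring.
  - intros HC eb dyb. rewrite key by assumption.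
    set (s := sqrt (wC / wF)).
    assert (Hs : s * s = wC / wF) by (apply sqrt_sqrt; apply Rlt_le, Rdiv_lt_0_compat; lra).
    assert (Hs2 : wF * (s*s) = wC) by (rewrite Hs; field; lra).
    assert (Hf : forall x, x * (wC - wF * x^2) = wF * (x * ((s - x) * (s + x)))).
    { intro x. rewrite <- Hs2. ring. }
    split.
    + intros [Hd Hx]. subst dyb. split; [reflexivity|].
      rewrite Hf in Hx. apply Rmult_integral in Hx. destruct Hx as [Hx|Hx]; [lra|].
      apply Rmult_integral in Hx. destruct Hx as [Hx|Hx]; [left; lra|].
      apply Rmult_integral in Hx. destruct Hx as [Hx|Hx]; right; [left|right]; lra.
    + intros [Hd He]. subst dyb. split; [reflexivity|]. rewrite Hf.
      destruct He as [He|[He|He]].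
      * replace (eb + Omega*dyBP) with 0 by lra. ring.
      * replace (eb + Omega*dyBP) with s by lra. ring.
      * replace (eb + Omega*dyBP) with (-s) by lra. ring.
Qed.
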